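(* Let $n\ge2$ and $j\in\{1,\dots,n+1\}$. Let $X_1,\dots,X_j\in\{0,1\}^n$ be distinct strings such that the vectors $|P(X_1)\rangle_1,\dots,|P(X_j)\rangle_1$ are linearly independent. Then the number of strings $Y\in\{0,1\}^n\setminus\{X_1,\dots,X_j\}$ such that $|P(Y)\rangle_1$ lies in the linear span of $|P(X_1)\rangle_1,\dots,|P(X_j)\rangle_1$ is at most $2^{j-1}-j$.
   Context: For $x\in\{0,1\}^n$, $|P(x)\rangle_1=(1,x_1,\dots,x_n)^T\in\mathbb{R}^{n+1}$. *)

(* Defs.v *)
From HB Require Import structures.
From mathcomp Require Import all_boot all_order all_algebra.
From mathcomp Require Import reals.
Set Implicit Arguments. Unset Strict Implicit. Unset Printing Implicit Defensive.
Import Order.TTheory GRing.Theory Num.Theory.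
Local Open Scope ring_scope.

Definition bitstring (n : nat) := {ffun 'I_n -> bool}.

(* |P(x)>_1 = (1, x_1, ..., x_n)^T in R^(n+1), as a row vector
   (index 0 carries the constant 1, index i+1 carries x_i). *)
Definition P1 (R : realType) (n : nat) (x : bitstring n) : 'rV[R]_(n.+1) :=
  \row_(k < n.+1) (if unlift ord0 k is Some i then (x i)%:R else 1).

(* Main.v *)
Require Import Defs.
From HB Require Import structures.
From mathcomp Require Import all_boot all_order all_algebra.
From mathcomp Require Import reals zify.
Import Order.TTheory GRing.Theory Num.Theory.
Local Open Scope ring_scope.

Section K.
Variable R : realType.

Lemma tr_rowsub_col m k r (f : 'I_r -> 'I_m) (B : 'M[R]_(k, m)) :
  (rowsub f B^T)^T = colsub f B.
Proof. by apply/matrixP => i l; rewrite !mxE. Qed.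

Lemma key (T : finType) m k (B : 'M[R]_(k, m)) (g : T -> 'rV[R]_m) (S : {set T}) :
  {in S &, injective g} -> (forall y i, g y 0 i = 0 \/ g y 0 i = 1) ->
  {in S &, forall y y', (g y - g y' <= B)%MS} -> (#|S| <= 2 ^ \rank B)%N.
Proof.
move=> ginj g01 gB.
pose f := maxrankfun B^T.
pose h y : {ffun 'I_(\rank B^T) -> bool} := [ffun i => g y 0 (f i) == 1].
have hinj : {in S &, injective h}.
  move=> y y' yS y'S hyy.
  apply: ginj => //.
  have dB := gB y y' yS y'S.
  have cf : colsub f (g y - g y') = 0.
    apply/matrixP => a l; rewrite [a]ord1 !mxE.
    have := congr1 (fun F : {ffun _ -> bool} => F l) hyy; rewrite /h !ffunE.
    have [->|->] := g01 y (f l); have [->|->] := g01 y' (f l);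
      rewrite ?eqxx ?subrr //; by rewrite eq_sym oner_eq0.
  have [a da] := submxP dB.
  have : (B^T <= rowsub f B^T)%MS by rewrite eq_maxrowsub.
  case/submxP => E dE.
  have dB' : B = colsub f B *m E^T.
    by have := congr1 trmx dE; rewrite trmxK trmx_mul tr_rowsub_col; exact.
  apply/eqP; rewrite -subr_eq0; apply/eqP.
  by rewrite da dB' mulmxA mulmx_colsub -da cf mul0mx.
rewrite -(card_in_imset hinj).
apply: leq_trans (max_card _) _.
by rewrite card_ffun card_bool card_ord mxrank_tr.
Qed.
End K.

Theorem lemma4 (R : realType) (n j : nat) (X : 'I_j -> bitstring n) :
  (2 <= n)%N -> (1 <= j <= n.+1)%N ->
  injective X ->
  free [seq P1 R (X i) | i : 'I_j] ->
  (#|[set Y : bitstring n | (Y \notin [seq X i | i : 'I_j]) &&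
       (P1 R Y \in <<[seq P1 R (X i) | i : 'I_j]>>%VS)]|
     <= 2 ^ j.-1 - j)%N.
Proof.
case: j X => [|j] X hn hj Xinj _; first by [].
set s := [seq P1 R (X i) | i : 'I_j.+1].
pose p0 := P1 R (X ord0).
pose W : 'M[R]_(j, n.+1) := \matrix_(k < j) (P1 R (X (lift ord0 k)) - p0).
have P10 (Y : bitstring n) : P1 R Y 0 0 = 1 by rewrite mxE unlift_none.
have P101 (Y : bitstring n) i : P1 R Y 0 i = 0 \/ P1 R Y 0 i = 1.
  rewrite mxE; case: unlift => [a|]; last by right.
  by case: (Y a); [right|left].
have P1inj : injective (@P1 R n).
  move=> Y Y' e; apply/ffunP => i.
  have := congr1 (fun M : 'rV[R]_n.+1 => M 0 (lift ord0 i)) e.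
  rewrite !mxE liftK.
  by case: (Y i); case: (Y' i) => //= /eqP; rewrite ?oner_eq0 // eq_sym oner_eq0.
have XW i : (P1 R (X i) - p0 <= W)%MS.
  case: (unliftP ord0 i) => [k ->|->]; last by rewrite subrr sub0mx.
  have -> : P1 R (X (lift ord0 k)) - p0 = row k W by rewrite rowK.
  exact: row_sub.
have spanW v : v \in <<s>>%VS -> (v - v 0 0 *: p0 <= W)%MS.
  move=> vs; have := coord_span (X := in_tuple s) vs => -> /=.
  set c := coord _.
  apply: (big_ind (fun u : 'rV[R]_n.+1 => (u - u 0 0 *: p0 <= W)%MS)).
  - by rewrite mxE scale0r subrr sub0mx.
  - move=> u w hu hw; rewrite mxE scalerDl opprD addrACA.
    exact: addmx_sub.
  - move=> i _; rewrite mxE -scalerA -scalerBr; apply: scalemx_sub.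
    have /mapP [k _ ->] : s`_i \in s by exact: mem_nth.
    by rewrite P10 scale1r.
pose S := [set Y : bitstring n | P1 R Y \in <<s>>%VS].
have SW (Y : bitstring n) : Y \in S -> (P1 R Y - p0 <= W)%MS.
  by rewrite inE => /spanW; rewrite P10 scale1r.
have cS : (#|S| <= 2 ^ j)%N.
  apply: leq_trans (@key R _ _ _ W (@P1 R n) S _ P101 _) _.
  - by move=> y y' _ _; apply: P1inj.
  - move=> y y' yS y'S.
    rewrite (_ : P1 R y - P1 R y' = (P1 R y - p0) + - (P1 R y' - p0)); last first.
      by rewrite opprB addrA subrK.
    by apply: addmx_sub; rewrite ?eqmx_opp; apply: SW.
  - by rewrite leq_exp2l // rank_leq_row.
pose I := [set X i | i : 'I_j.+1].
have cI : #|I| = j.+1 by rewrite card_imset // card_ord.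
set S' := [set Y | _].
have sub : S' :|: I \subset S.
  apply/subsetP => Y; rewrite !inE => /orP [/andP [_ ->] //|/imsetP [i _ ->]].
  by apply: memv_span; apply: map_f; rewrite mem_enum.
have dis : S' :&: I = set0.
  apply/setP => Y; rewrite !inE; apply/negP => /andP [/andP [nY _] /imsetP [i _ eY]].
  by move: nY; rewrite eY map_f // mem_enum.
have := cardsUI S' I; rewrite dis cards0 addn0 cI => e.
have := subset_leq_card sub; rewrite e => h.
rewrite /=; move: h cS; set a := #|S|; set b := (2 ^ j)%N; move=> h1 h2.
move: h1 h2; move: (#|S'|) a b => x y z h1 h2; lia.
Qed.
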